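(* Let $M$ be an oriented surface with a Riemannian metric, $A$ an $\mathfrak{su}(2)$-valued $1$-form on $M$, and $b:SM\to SU(2)$ smooth with $X(b)+Ab=0$ and finite Fourier expansion $b=\sum_{k=-N}^{N}b_k$ with $N\ge1$ and $b_{-N}\ne0$. Fix $\xi\in\mathbb{C}^2$. In local isothermal coordinates $(x,y)$ with metric $e^{2\lambda}(dx^2+dy^2)$ and the induced coordinates $(x,y,\theta)$ on $SM$, write $b_{-N}=h(x,y)e^{-iN\theta}$ and $A=A_x\,dx+A_y\,dy$, $A_{\bar z}=\tfrac12(A_x+iA_y)$. Then $$\bar\partial\big(e^{-N\lambda}h\xi\big)+A_{\bar z}\,e^{-N\lambda}h\xi=0,$$ i.e. the local section $e^{-N\lambda}h\xi\,(d\bar z)^N$ of $(M\times\mathbb{C}^2)\otimes K^{\otimes -N}$ is $\bar\partial_A$-holomorphic.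
   Context: $SM$ is the unit tangent bundle, $X$ the geodesic vector field, $V$ the vertical vector field; $A$ is regarded as the function $A(x,v)=A_x(v)$ on $SM$. $L^2(SM,\mathbb{M}_2(\mathbb{C}))=\bigoplus_{k\in\mathbb{Z}}H_k$ where $-iV$ acts as $k$ on $H_k$, and $b_k$ is the component of $b$ in $H_k$. $\theta$ is the angle between $v$ and $\partial/\partial x$, so $V=\partial/\partial\theta$. $\bar\partial=\tfrac12(\partial_x+i\partial_y)$, and $K$ is the canonical line bundle of $M$. *)

(* Defs.v *)
From Stdlib Require Import Reals List ZArith.
From Coquelicot Require Import Coquelicot.
Open Scope R_scope.

(* partial derivative of a real function of three real variables (x,y,theta)
   in direction i (0 = x, 1 = y, anything else = theta) *)
Definition pd (i : nat) (f : R -> R -> R -> R) : R -> R -> R -> R :=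
  fun x y t =>
    match i with
    | O => Derive (fun s => f s y t) x
    | S O => Derive (fun s => f x s t) y
    | _ => Derive (fun s => f x y s) t
    end.

Definition iter_pd (l : list nat) (f : R -> R -> R -> R) : R -> R -> R -> R :=
  fold_right pd f l.

Definition cont3_at (f : R -> R -> R -> R) (x y t : R) : Prop :=
  forall eps, 0 < eps -> exists delta, 0 < delta /\
    forall x' y' t', Rabs (x' - x) < delta -> Rabs (y' - y) < delta ->
      Rabs (t' - t) < delta -> Rabs (f x' y' t' - f x y t) < eps.

Definition open2 (U : R -> R -> Prop) : Prop :=
  forall x y, U x y -> exists r, 0 < r /\
    forall x' y', Rabs (x' - x) < r -> Rabs (y' - y) < r -> U x' y'.

Definition smooth3_on (U : R -> R -> Prop) (f : R -> R -> R -> R) : Prop :=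
  forall (l : list nat) x y t, U x y ->
    cont3_at (iter_pd l f) x y t /\
    ex_derive (fun s => iter_pd l f s y t) x /\
    ex_derive (fun s => iter_pd l f x s t) y /\
    ex_derive (fun s => iter_pd l f x y s) t.

Definition smooth2_on (U : R -> R -> Prop) (g : R -> R -> R) : Prop :=
  smooth3_on U (fun x y _ => g x y).

Record M2 := mkM2 { m11 : C; m12 : C; m21 : C; m22 : C }.
Definition C2 : Type := (C * C)%type.

Definition M2add (a b : M2) : M2 :=
  mkM2 (Cplus (m11 a) (m11 b)) (Cplus (m12 a) (m12 b))
       (Cplus (m21 a) (m21 b)) (Cplus (m22 a) (m22 b)).
Definition M2scal (c : C) (a : M2) : M2 :=
  mkM2 (Cmult c (m11 a)) (Cmult c (m12 a)) (Cmult c (m21 a)) (Cmult c (m22 a)).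
Definition M2mul (a b : M2) : M2 :=
  mkM2 (Cplus (Cmult (m11 a) (m11 b)) (Cmult (m12 a) (m21 b)))
       (Cplus (Cmult (m11 a) (m12 b)) (Cmult (m12 a) (m22 b)))
       (Cplus (Cmult (m21 a) (m11 b)) (Cmult (m22 a) (m21 b)))
       (Cplus (Cmult (m21 a) (m12 b)) (Cmult (m22 a) (m22 b))).
Definition M2zero : M2 := mkM2 (RtoC 0) (RtoC 0) (RtoC 0) (RtoC 0).
Definition M2one : M2 := mkM2 (RtoC 1) (RtoC 0) (RtoC 0) (RtoC 1).
Definition M2adj (a : M2) : M2 :=
  mkM2 (Cconj (m11 a)) (Cconj (m21 a)) (Cconj (m12 a)) (Cconj (m22 a)).
Definition M2det (a : M2) : C :=
  Cminus (Cmult (m11 a) (m22 a)) (Cmult (m12 a) (m21 a)).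
Definition M2tr (a : M2) : C := Cplus (m11 a) (m22 a).

Definition in_SU2 (a : M2) : Prop := M2mul (M2adj a) a = M2one /\ M2det a = RtoC 1.
Definition in_su2 (a : M2) : Prop := M2adj a = M2scal (RtoC (-1)) a /\ M2tr a = RtoC 0.

Definition M2app (a : M2) (v : C2) : C2 :=
  (Cplus (Cmult (m11 a) (fst v)) (Cmult (m12 a) (snd v)),
   Cplus (Cmult (m21 a) (fst v)) (Cmult (m22 a) (snd v))).
Definition C2add (v w : C2) : C2 := (Cplus (fst v) (fst w), Cplus (snd v) (snd w)).
Definition C2scal (c : C) (v : C2) : C2 := (Cmult c (fst v), Cmult c (snd v)).
Definition C2zero : C2 := (RtoC 0, RtoC 0).

Definition smoothC3_on U (f : R -> R -> R -> C) : Prop :=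
  smooth3_on U (fun x y t => fst (f x y t)) /\ smooth3_on U (fun x y t => snd (f x y t)).
Definition smoothM3_on U (f : R -> R -> R -> M2) : Prop :=
  smoothC3_on U (fun x y t => m11 (f x y t)) /\ smoothC3_on U (fun x y t => m12 (f x y t)) /\
  smoothC3_on U (fun x y t => m21 (f x y t)) /\ smoothC3_on U (fun x y t => m22 (f x y t)).
Definition smoothM2_on U (f : R -> R -> M2) : Prop :=
  smoothM3_on U (fun x y _ => f x y).

Definition DerC (f : R -> C) (s : R) : C :=
  (Derive (fun u => fst (f u)) s, Derive (fun u => snd (f u)) s).
Definition ex_derC (f : R -> C) (s : R) : Prop :=
  ex_derive (fun u => fst (f u)) s /\ ex_derive (fun u => snd (f u)) s.
Definition DerM (f : R -> M2) (s : R) : M2 :=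
  mkM2 (DerC (fun u => m11 (f u)) s) (DerC (fun u => m12 (f u)) s)
       (DerC (fun u => m21 (f u)) s) (DerC (fun u => m22 (f u)) s).
Definition DerC2 (f : R -> C2) (s : R) : C2 :=
  (DerC (fun u => fst (f u)) s, DerC (fun u => snd (f u)) s).
Definition ex_derC2 (f : R -> C2) (s : R) : Prop :=
  ex_derC (fun u => fst (f u)) s /\ ex_derC (fun u => snd (f u)) s.

(** * The geometry in isothermal coordinates
    Metric e^{2 lam}(dx^2+dy^2) on U; SM = U x S^1 with theta the angle
    between v and d/dx, so v = e^{-lam}(cos theta, sin theta). *)

Definition Xgeod (lam : R -> R -> R) (b : R -> R -> R -> M2) (x y t : R) : M2 :=
  let lx := Derive (fun s => lam s y) x in
  let ly := Derive (fun s => lam x s) y in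
  M2scal (RtoC (exp (- lam x y)))
    (M2add (M2add (M2scal (RtoC (cos t)) (DerM (fun s => b s y t) x))
                  (M2scal (RtoC (sin t)) (DerM (fun s => b x s t) y)))
           (M2scal (RtoC (- lx * sin t + ly * cos t)) (DerM (fun s => b x y s) t))).

(* A as a function on SM: A(x,v) = A_x(v) = e^{-lam}(cos t A_x + sin t A_y) *)
Definition A_SM (lam : R -> R -> R) (Ax Ay : R -> R -> M2) (x y t : R) : M2 :=
  M2scal (RtoC (exp (- lam x y)))
    (M2add (M2scal (RtoC (cos t)) (Ax x y)) (M2scal (RtoC (sin t)) (Ay x y))).

Definition eiC (s : R) : C := (cos s, sin s).

Definition fourier_sum (N : nat) (c : Z -> R -> R -> M2) (x y t : R) : M2 :=
  fold_right M2add M2zero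
    (map (fun j : nat =>
            let k := (Z.of_nat j - Z.of_nat N)%Z in
            M2scal (eiC (IZR k * t)) (c k x y))
         (seq 0 (2 * N + 1))).

Definition dbar (v : R -> R -> C2) (x y : R) : C2 :=
  C2scal (RtoC (/ 2))
    (C2add (DerC2 (fun s => v s y) x) (C2scal Ci (DerC2 (fun s => v x s) y))).

Definition Azbar (Ax Ay : R -> R -> M2) (x y : R) : M2 :=
  M2scal (RtoC (/ 2)) (M2add (Ax x y) (M2scal Ci (Ay x y))).

(* Main.v *)
Require Import Defs.
From Stdlib Require Import Reals List ZArith Lra Lia FunctionalExtensionality.
From Coquelicot Require Import Coquelicot.
Open Scope R_scope.

Ltac cring := apply injective_projections; simpl; ring.
Ltac cring2 := apply injective_projections; cbn [fst snd Cplus Cmult Cminus Copp RtoC]; ring.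

Fixpoint csum (f : nat -> C) (n : nat) : C :=
  match n with O => RtoC 0 | S n => Cplus (csum f n) (f n) end.

Lemma csum_ext f g n : (forall j, (j < n)%nat -> f j = g j) -> csum f n = csum g n.
Proof. induction n; simpl; intros H; auto. rewrite IHn by (intros; apply H; lia).
rewrite H by lia. auto. Qed.

Lemma csum_plus f g n : csum (fun j => Cplus (f j) (g j)) n = Cplus (csum f n) (csum g n).
Proof. induction n; simpl. cring. rewrite IHn. cring. Qed.

Lemma csum_mult_l k f n : csum (fun j => Cmult k (f j)) n = Cmult k (csum f n).
Proof. induction n; simpl. cring. rewrite IHn. cring. Qed.

Lemma csum_zero n : csum (fun _ => RtoC 0) n = RtoC 0.
Proof. induction n; simpl; auto. rewrite IHn. cring. Qed.

Lemma csum_switch (u : nat -> nat -> C) m n :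
  csum (fun i => csum (u i) n) m = csum (fun j => csum (fun i => u i j) m) n.
Proof. induction m; simpl. now rewrite csum_zero. rewrite IHm, <- csum_plus. auto. Qed.

Lemma csum_first f n : csum f (S n) = Cplus (f O) (csum (fun j => f (S j)) n).
Proof. induction n; simpl in *. cring. rewrite IHn. simpl. cring. Qed.

Lemma fold_seq_csum (f : nat -> C) a L :
  fold_right Cplus (RtoC 0) (map f (seq a L)) = csum (fun p => f (a + p)%nat) L.
Proof. revert a; induction L; intros a. auto.
cbn [seq map fold_right]. rewrite csum_first. rewrite IHL. replace (a+0)%nat with a by lia.
f_equal. apply csum_ext; intros; f_equal; lia. Qed.

Lemma eiC_add a b : eiC (a + b) = Cmult (eiC a) (eiC b).
Proof. unfold eiC. rewrite cos_plus, sin_plus. cring. Qed.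

Lemma eiC_0 : eiC 0 = RtoC 1.
Proof. unfold eiC. rewrite cos_0, sin_0. auto. Qed.

Lemma geom (u : nat -> C) w n : (forall j, u (S j) = Cmult (u j) w) ->
  Cmult (csum u n) (Cminus w (RtoC 1)) = Cminus (u n) (u O).
Proof. intros H. induction n; simpl. cring. rewrite H.
 transitivity (Cplus (Cmult (csum u n) (Cminus w 1)) (Cmult (u n) (Cminus w 1))). cring.
 rewrite IHn. cring. Qed.

Definition th (M j : nat) : R := 2 * PI * INR j / INR M.

Lemma orth M m : (0 < M)%nat -> (m < M)%nat ->
  csum (fun j => eiC (INR m * th M j)) M = if Nat.eqb m 0 then RtoC (INR M) else RtoC 0.
Proof.
intros HM Hm. assert (HMr : 0 < INR M) by (apply lt_0_INR; lia).
destruct (Nat.eqb_spec m 0) as [->|Hm0].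
- transitivity (csum (fun _ => RtoC 1) M).
  apply csum_ext; intros. rewrite Rmult_0_l, eiC_0; auto.
  clear. induction M; cbn [csum]. auto. rewrite IHM. rewrite S_INR. cring.
- set (w := eiC (INR m * (2*PI/INR M))).
  assert (Hg := geom (fun j => eiC (INR m * th M j)) w M).
  simpl in Hg.
  assert (HS: forall j, eiC (INR m * th M (S j)) = Cmult (eiC (INR m * th M j)) w).
  { intros j. unfold w. rewrite <- eiC_add. f_equal. unfold th. rewrite S_INR. field. lra. }
  specialize (Hg HS).
  assert (HMe : eiC (INR m * th M M) = RtoC 1).
  { unfold th. replace (INR m * (2 * PI * INR M / INR M)) with (0 + 2 * INR m * PI) by (field; lra).
    unfold eiC. rewrite cos_period. rewrite cos_0.
    rewrite sin_period, sin_0. auto. }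
  rewrite HMe in Hg. unfold th in Hg. replace (INR m * (2 * PI * INR 0 / INR M)) with 0 in Hg by (simpl; field; lra). rewrite eiC_0 in Hg.
  assert (Hw : w <> RtoC 1).
  { unfold w, eiC. set (a := INR m * (2 * PI / INR M)).
    assert (Hm1 : 1 <= INR m) by (apply (le_INR 1); lia).
    assert (HmM : INR m < INR M) by (apply lt_INR; lia).
    assert (Ha0 : 0 < a) by (unfold a; apply Rmult_lt_0_compat; [lra| apply Rdiv_lt_0_compat; [apply Rmult_lt_0_compat; [lra|apply PI_RGT_0]|lra]]).
    assert (Ha2 : a < 2*PI).
    { unfold a. apply (Rmult_lt_reg_r (INR M)); auto. field_simplify; try lra.
      assert (0 < PI) by apply PI_RGT_0. nra. }
    intros E. injection E as E1 E2.
    destruct (Rlt_le_dec a PI) as [h|h]. pose proof (sin_gt_0 a Ha0 h); lra.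
    destruct (Req_dec a PI) as [->|h2]. rewrite cos_PI in E1; lra.
    pose proof (sin_lt_0 a (ltac:(lra)) Ha2); lra. }
  assert (Hw1 : Cminus w (RtoC 1) <> RtoC 0).
  { intros E; apply Hw. apply injective_projections; injection E; simpl; intros; lra. }
  set (z := csum _ M) in *.
  transitivity (Cmult (Cmult z (Cminus w 1)) (Cinv (Cminus w 1))). field. auto.
  rewrite Hg. cring.
Qed.

Definition Dft (M : nat) (s : R) (g : R -> C) : C :=
  Cmult (RtoC (/ INR M)) (csum (fun j => Cmult (g (th M j)) (eiC (s * th M j))) M).

Lemma csum_mult_r k f n : csum (fun j => Cmult (f j) k) n = Cmult (csum f n) k.
Proof. rewrite <- (Cmult_comm k), <- csum_mult_l. apply csum_ext; intros; apply Cmult_comm. Qed.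

Lemma Dft_trig M q a L d s g :
  (0 < L)%nat -> (L + d <= M)%nat -> s = INR d - q ->
  (forall t, g t = csum (fun p => Cmult (eiC ((INR p + q) * t)) (a p)) L) ->
  Dft M s g = if Nat.eqb d 0 then a O else RtoC 0.
Proof.
intros HL HLM Hs Hg. unfold Dft.
assert (HM : 0 < INR M) by (apply lt_0_INR; lia).
rewrite (csum_ext _ (fun j => csum (fun p => Cmult (a p) (eiC (INR (p + d) * th M j))) L)).
2:{ intros j _. rewrite Hg, <- csum_mult_r. apply csum_ext. intros p _.
    rewrite Cmult_comm, Cmult_assoc, <- eiC_add, Cmult_comm. f_equal. f_equal.
    rewrite plus_INR, Hs. ring. }
rewrite csum_switch.
rewrite (csum_ext _ (fun p => Cmult (a p) (if Nat.eqb (p+d) 0 then RtoC (INR M) else RtoC 0))).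
2:{ intros p Hp. rewrite csum_mult_l. rewrite orth by lia. auto. }
destruct (Nat.eqb_spec d 0) as [->|Hd].
- destruct L as [|L]. lia. rewrite csum_first. rewrite (csum_ext _ (fun _ => RtoC 0)).
  rewrite csum_zero. simpl. apply injective_projections; simpl; field; lra.
  intros j _. replace (Nat.eqb (S j + 0) 0) with false. cring. symmetry; apply Nat.eqb_neq; lia.
- rewrite (csum_ext _ (fun _ => RtoC 0)). rewrite csum_zero. cring.
  intros j _. replace (Nat.eqb (j + d) 0) with false. cring. symmetry; apply Nat.eqb_neq; lia.
Qed.

Lemma Dft_ext M s f g : (forall t, f t = g t) -> Dft M s f = Dft M s g.
Proof. intros H. apply functional_extensionality in H. now subst. Qed.

Lemma Dft_add M s f g : Dft M s (fun t => Cplus (f t) (g t)) = Cplus (Dft M s f) (Dft M s g).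
Proof. unfold Dft. rewrite <- Cmult_plus_distr_l, <- csum_plus. f_equal. apply csum_ext; intros. cring. Qed.

Lemma Dft_scal M s k f : Dft M s (fun t => Cmult k (f t)) = Cmult k (Dft M s f).
Proof. unfold Dft. rewrite (csum_ext _ (fun j => Cmult k (Cmult (f (th M j)) (eiC (s * th M j))))) by (intros; cring).
rewrite csum_mult_l. cring. Qed.

Lemma Dft_zero M s : Dft M s (fun _ => RtoC 0) = RtoC 0.
Proof. unfold Dft. rewrite (csum_ext _ (fun _ => RtoC 0)), csum_zero. cring. intros; cring. Qed.

Lemma Dft_comb M s g k s1 f1 s2 f2 :
  (forall t, Cmult (g t) (eiC (s * t)) = Cmult k (Cplus (Cmult (f1 t) (eiC (s1 * t))) (Cmult (f2 t) (eiC (s2 * t))))) ->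
  Dft M s g = Cmult k (Cplus (Dft M s1 f1) (Dft M s2 f2)).
Proof. intros H. unfold Dft. rewrite (csum_ext _ (fun j => Cmult k (Cplus (Cmult (f1 (th M j)) (eiC (s1 * th M j))) (Cmult (f2 (th M j)) (eiC (s2 * th M j)))))) by (intros; apply H).
rewrite csum_mult_l, csum_plus. cring. Qed.

Lemma Dft_cos M s f : Dft M s (fun t => Cmult (RtoC (cos t)) (f t)) =
  Cmult (RtoC (/2)) (Cplus (Dft M (s+1) f) (Dft M (s-1) f)).
Proof. apply Dft_comb. intros t.
replace ((s+1) * t) with (s * t + t) by ring.
replace ((s-1) * t) with (s * t - t) by ring.
unfold eiC. rewrite cos_plus, sin_plus, cos_minus, sin_minus. apply injective_projections; simpl; field. Qed.

Lemma Dft_sin M s f : Dft M s (fun t => Cmult (RtoC (sin t)) (f t)) =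
  Cmult (0, -/2) (Cplus (Dft M (s+1) f) (Dft M (s-1) (fun t => Cmult (RtoC (-1)) (f t)))).
Proof. apply Dft_comb. intros t.
replace ((s+1) * t) with (s * t + t) by ring.
replace ((s-1) * t) with (s * t - t) by ring.
unfold eiC. rewrite cos_plus, sin_plus, cos_minus, sin_minus. apply injective_projections; simpl; field. Qed.

Lemma exd_plus (f g : R -> R) x : ex_derive f x -> ex_derive g x -> ex_derive (fun u => f u + g u) x.
Proof. exact (ex_derive_plus f g x). Qed.
Lemma exd_minus (f g : R -> R) x : ex_derive f x -> ex_derive g x -> ex_derive (fun u => f u - g u) x.
Proof. exact (ex_derive_minus f g x). Qed.

Lemma ex_derC_plus f g s : ex_derC f s -> ex_derC g s -> ex_derC (fun u => Cplus (f u) (g u)) s.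
Proof. intros [] []; split; simpl; apply exd_plus; auto. Qed.

Lemma DerC_plus f g s : ex_derC f s -> ex_derC g s ->
  DerC (fun u => Cplus (f u) (g u)) s = Cplus (DerC f s) (DerC g s).
Proof. intros [] []; unfold DerC; simpl. rewrite !Derive_plus; auto. Qed.

Lemma ex_derC_mult f g s : ex_derC f s -> ex_derC g s -> ex_derC (fun u => Cmult (f u) (g u)) s.
Proof. intros [] []; split; cbn [fst snd Cmult].
apply exd_minus; apply ex_derive_mult; assumption.
apply exd_plus; apply ex_derive_mult; assumption. Qed.

Lemma DerC_mult f g s : ex_derC f s -> ex_derC g s ->
  DerC (fun u => Cmult (f u) (g u)) s = Cplus (Cmult (DerC f s) (g s)) (Cmult (f s) (DerC g s)).
Proof. intros [Hf1 Hf2] [Hg1 Hg2]; unfold DerC; cbn [fst snd Cmult Cplus].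
rewrite (Derive_minus (fun u => fst (f u) * fst (g u)) (fun u => snd (f u) * snd (g u)))
  by (apply ex_derive_mult; assumption).
rewrite (Derive_plus (fun u => fst (f u) * snd (g u)) (fun u => snd (f u) * fst (g u)))
  by (apply ex_derive_mult; assumption).
rewrite (Derive_mult (fun u => fst (f u)) (fun u => fst (g u))) by assumption.
rewrite (Derive_mult (fun u => snd (f u)) (fun u => snd (g u))) by assumption.
rewrite (Derive_mult (fun u => fst (f u)) (fun u => snd (g u))) by assumption.
rewrite (Derive_mult (fun u => snd (f u)) (fun u => fst (g u))) by assumption.
apply injective_projections; cbn [fst snd Cplus Cmult]; ring. Qed.

Lemma ex_derC_const k s : ex_derC (fun _ => k) s.
Proof. split; apply ex_derive_const. Qed.

Lemma DerC_const k s : DerC (fun _ => k) s = RtoC 0.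
Proof. unfold DerC. rewrite !Derive_const. auto. Qed.

Lemma ex_derC_scal k f s : ex_derC f s -> ex_derC (fun u => Cmult k (f u)) s.
Proof. intros; apply ex_derC_mult; auto; apply ex_derC_const. Qed.

Lemma DerC_scal k f s : ex_derC f s -> DerC (fun u => Cmult k (f u)) s = Cmult k (DerC f s).
Proof. intros H. rewrite DerC_mult; auto. rewrite DerC_const. cring. apply ex_derC_const. Qed.

Lemma ex_derC_RtoC h s : ex_derive h s -> ex_derC (fun u => RtoC (h u)) s.
Proof. intros; split; simpl; auto. apply ex_derive_const. Qed.

Lemma DerC_RtoC h s : DerC (fun u => RtoC (h u)) s = RtoC (Derive h s).
Proof. unfold DerC; simpl. rewrite Derive_const. auto. Qed.

Lemma ex_derC_csum (F : R -> nat -> C) n s : (forall j, (j < n)%nat -> ex_derC (fun u => F u j) s) ->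
  ex_derC (fun u => csum (F u) n) s.
Proof. induction n; simpl; intros H. apply ex_derC_const.
apply ex_derC_plus. apply IHn; intros; apply H; lia. apply H; lia. Qed.

Lemma DerC_csum (F : R -> nat -> C) n s : (forall j, (j < n)%nat -> ex_derC (fun u => F u j) s) ->
  DerC (fun u => csum (F u) n) s = csum (fun j => DerC (fun u => F u j) s) n.
Proof. induction n; simpl; intros H. apply DerC_const.
rewrite DerC_plus. rewrite IHn. auto. intros; apply H; lia.
apply ex_derC_csum; intros; apply H; lia. apply H; lia. Qed.

Lemma locally_of (x r : R) (P : R -> Prop) : 0 < r -> (forall u, Rabs (u - x) < r -> P u) -> locally x P.
Proof. intros Hr H. exists (mkposreal r Hr). intros u Hu. apply H. exact Hu. Qed.

Lemma DerC_ext_loc f g x : locally x (fun u => f u = g u) -> DerC f x = DerC g x.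
Proof. intros H. unfold DerC. f_equal; apply Derive_ext_loc;
 eapply filter_imp; try apply H; intros u Hu; simpl; now rewrite Hu. Qed.

Lemma ex_derC_ext_loc f g x : locally x (fun u => f u = g u) -> ex_derC f x -> ex_derC g x.
Proof. intros H [H1 H2]. split.
 apply (ex_derive_ext_loc (fun u => fst (f u))); auto.
 eapply filter_imp; try apply H; intros u Hu; simpl; now rewrite Hu.
 apply (ex_derive_ext_loc (fun u => snd (f u))); auto.
 eapply filter_imp; try apply H; intros u Hu; simpl; now rewrite Hu. Qed.

Lemma ex_derC_Dft M s (F : R -> R -> C) x : (forall t, ex_derC (fun u => F u t) x) ->
  ex_derC (fun u => Dft M s (F u)) x.
Proof. intros H. unfold Dft. apply ex_derC_scal. apply ex_derC_csum. intros j _.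
 apply (ex_derC_mult (fun u => F u (th M j)) (fun _ => eiC _)); auto. apply ex_derC_const. Qed.

Lemma DerC_Dft M s (F : R -> R -> C) x : (forall t, ex_derC (fun u => F u t) x) ->
  DerC (fun u => Dft M s (F u)) x = Dft M s (fun t => DerC (fun u => F u t) x).
Proof. intros H. unfold Dft. rewrite DerC_scal. rewrite DerC_csum. f_equal. apply csum_ext.
 intros j _. rewrite (DerC_mult (fun u => F u (th M j)) (fun _ => eiC _)); auto.
 rewrite DerC_const. cring. apply ex_derC_const.
 intros j _. apply (ex_derC_mult (fun u => F u (th M j)) (fun _ => eiC _)); auto. apply ex_derC_const.
 apply ex_derC_csum. intros j _.
 apply (ex_derC_mult (fun u => F u (th M j)) (fun _ => eiC _)); auto. apply ex_derC_const. Qed.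

Definition DftM (M : nat) (s : R) (f : R -> M2) : M2 :=
  mkM2 (Dft M s (fun t => m11 (f t))) (Dft M s (fun t => m12 (f t)))
       (Dft M s (fun t => m21 (f t))) (Dft M s (fun t => m22 (f t))).

Lemma DftM_add M s f g : DftM M s (fun t => M2add (f t) (g t)) = M2add (DftM M s f) (DftM M s g).
Proof. unfold DftM; cbn [m11 m12 m21 m22 M2add]. rewrite !Dft_add. auto. Qed.

Lemma DftM_scal M s k f : DftM M s (fun t => M2scal k (f t)) = M2scal k (DftM M s f).
Proof. unfold DftM; cbn [m11 m12 m21 m22 M2scal]. rewrite !Dft_scal. auto. Qed.

Lemma DftM_cos M s f : DftM M s (fun t => M2scal (RtoC (cos t)) (f t)) =
  M2scal (RtoC (/2)) (M2add (DftM M (s+1) f) (DftM M (s-1) f)).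
Proof. unfold DftM; cbn [m11 m12 m21 m22 M2scal M2add]. rewrite !Dft_cos. auto. Qed.

Lemma DftM_sin M s f : DftM M s (fun t => M2scal (RtoC (sin t)) (f t)) =
  M2scal (0, -/2) (M2add (DftM M (s+1) f) (M2scal (RtoC (-1)) (DftM M (s-1) f))).
Proof. unfold DftM; cbn [m11 m12 m21 m22 M2scal M2add]. rewrite !Dft_sin, !Dft_scal. auto. Qed.

Lemma DftM_mul M s P f : DftM M s (fun t => M2mul P (f t)) = M2mul P (DftM M s f).
Proof. unfold DftM; cbn [m11 m12 m21 m22 M2mul]. rewrite !Dft_add, !Dft_scal. auto. Qed.

Lemma DftM_zero M s : DftM M s (fun _ => M2zero) = M2zero.
Proof. unfold DftM; cbn [m11 m12 m21 m22 M2zero]. rewrite !Dft_zero. auto. Qed.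

Definition ex_derM (f : R -> M2) (s : R) : Prop :=
  ex_derC (fun u => m11 (f u)) s /\ ex_derC (fun u => m12 (f u)) s /\
  ex_derC (fun u => m21 (f u)) s /\ ex_derC (fun u => m22 (f u)) s.

Lemma DftM_DerM M s (F : R -> R -> M2) x : (forall t, ex_derM (fun u => F u t) x) ->
  DftM M s (fun t => DerM (fun u => F u t) x) = DerM (fun u => DftM M s (F u)) x.
Proof. intros H. unfold DftM, DerM; cbn [m11 m12 m21 m22].
 f_equal; symmetry.
 apply (DerC_Dft M s (fun u t => m11 (F u t))); intros t; destruct (H t) as (?&?&?&?); assumption.
 apply (DerC_Dft M s (fun u t => m12 (F u t))); intros t; destruct (H t) as (?&?&?&?); assumption.
 apply (DerC_Dft M s (fun u t => m21 (F u t))); intros t; destruct (H t) as (?&?&?&?); assumption.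
 apply (DerC_Dft M s (fun u t => m22 (F u t))); intros t; destruct (H t) as (?&?&?&?); assumption. Qed.

Lemma DerM_ext_loc f g x : locally x (fun u => f u = g u) -> DerM f x = DerM g x.
Proof. intros H. unfold DerM. f_equal; apply DerC_ext_loc;
 eapply filter_imp; try apply H; intros u Hu; simpl; now rewrite Hu. Qed.

Lemma DerM_zero x : DerM (fun _ => M2zero) x = M2zero.
Proof. unfold DerM; cbn [m11 m12 m21 m22 M2zero]. rewrite !DerC_const. auto. Qed.

Lemma ex_derM_ext_loc f g x : locally x (fun u => f u = g u) -> ex_derM f x -> ex_derM g x.
Proof. intros H (H1&H2&H3&H4). split; [|split; [|split]].
 - apply (ex_derC_ext_loc _ _ _ (filter_imp _ _ (fun u (Hu : f u = g u) => f_equal m11 Hu) H) H1).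
 - apply (ex_derC_ext_loc _ _ _ (filter_imp _ _ (fun u (Hu : f u = g u) => f_equal m12 Hu) H) H2).
 - apply (ex_derC_ext_loc _ _ _ (filter_imp _ _ (fun u (Hu : f u = g u) => f_equal m21 Hu) H) H3).
 - apply (ex_derC_ext_loc _ _ _ (filter_imp _ _ (fun u (Hu : f u = g u) => f_equal m22 Hu) H) H4). Qed.

Lemma ex_derM_DftM M s (F : R -> R -> M2) x : (forall t, ex_derM (fun u => F u t) x) ->
  ex_derM (fun u => DftM M s (F u)) x.
Proof. intros H. unfold DftM; split; [|split; [|split]]; cbn [m11 m12 m21 m22].
 apply (ex_derC_Dft M s (fun u t => m11 (F u t))); intros t; destruct (H t) as (?&?&?&?); assumption.
 apply (ex_derC_Dft M s (fun u t => m12 (F u t))); intros t; destruct (H t) as (?&?&?&?); assumption.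
 apply (ex_derC_Dft M s (fun u t => m21 (F u t))); intros t; destruct (H t) as (?&?&?&?); assumption.
 apply (ex_derC_Dft M s (fun u t => m22 (F u t))); intros t; destruct (H t) as (?&?&?&?); assumption. Qed.

Lemma fold_m11 l : m11 (fold_right M2add M2zero l) = fold_right Cplus (RtoC 0) (map m11 l).
Proof. induction l; simpl; auto. now rewrite IHl. Qed.
Lemma fold_m12 l : m12 (fold_right M2add M2zero l) = fold_right Cplus (RtoC 0) (map m12 l).
Proof. induction l; simpl; auto. now rewrite IHl. Qed.
Lemma fold_m21 l : m21 (fold_right M2add M2zero l) = fold_right Cplus (RtoC 0) (map m21 l).
Proof. induction l; simpl; auto. now rewrite IHl. Qed.
Lemma fold_m22 l : m22 (fold_right M2add M2zero l) = fold_right Cplus (RtoC 0) (map m22 l).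
Proof. induction l; simpl; auto. now rewrite IHl. Qed.

Lemma IZR_sub_nat p N : IZR (Z.of_nat p - Z.of_nat N) = INR p + - INR N.
Proof. rewrite minus_IZR, <- !INR_IZR_INZ. ring. Qed.

Ltac fs_entry fl := unfold fourier_sum; rewrite fl, map_map, fold_seq_csum; apply csum_ext;
  intros p _; cbn [m11 m12 m21 m22 M2scal]; rewrite IZR_sub_nat; reflexivity.

Lemma fs_m11 N c x y t : m11 (fourier_sum N c x y t) =
  csum (fun p => Cmult (eiC ((INR p + - INR N) * t)) (m11 (c (Z.of_nat p - Z.of_nat N)%Z x y))) (2*N+1).
Proof. fs_entry fold_m11. Qed.
Lemma fs_m12 N c x y t : m12 (fourier_sum N c x y t) =
  csum (fun p => Cmult (eiC ((INR p + - INR N) * t)) (m12 (c (Z.of_nat p - Z.of_nat N)%Z x y))) (2*N+1).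
Proof. fs_entry fold_m12. Qed.
Lemma fs_m21 N c x y t : m21 (fourier_sum N c x y t) =
  csum (fun p => Cmult (eiC ((INR p + - INR N) * t)) (m21 (c (Z.of_nat p - Z.of_nat N)%Z x y))) (2*N+1).
Proof. fs_entry fold_m21. Qed.
Lemma fs_m22 N c x y t : m22 (fourier_sum N c x y t) =
  csum (fun p => Cmult (eiC ((INR p + - INR N) * t)) (m22 (c (Z.of_nat p - Z.of_nat N)%Z x y))) (2*N+1).
Proof. fs_entry fold_m22. Qed.

Lemma ex_derC_eiC w t : ex_derC (fun s => eiC (w * s)) t.
Proof. split; unfold eiC; simpl; auto_derive; auto. Qed.

Lemma DerC_eiC w t : DerC (fun s => eiC (w * s)) t = Cmult (eiC (w * t)) (0, w).
Proof. unfold DerC, eiC; simpl. apply injective_projections; simpl.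
 apply is_derive_unique. auto_derive; auto. ring.
 apply is_derive_unique. auto_derive; auto. ring. Qed.

Lemma ex_derC_trig q a L t : ex_derC (fun s => csum (fun p => Cmult (eiC ((INR p + q) * s)) (a p)) L) t.
Proof. apply (ex_derC_csum (fun s p => Cmult (eiC ((INR p + q) * s)) (a p))).
 intros j _. apply (ex_derC_mult (fun s => eiC ((INR j + q) * s)) (fun _ => a j)).
 apply ex_derC_eiC. apply ex_derC_const. Qed.

Lemma DerC_trig q a L t : DerC (fun s => csum (fun p => Cmult (eiC ((INR p + q) * s)) (a p)) L) t =
  csum (fun p => Cmult (eiC ((INR p + q) * t)) (Cmult (0, INR p + q) (a p))) L.
Proof. rewrite (DerC_csum (fun s p => Cmult (eiC ((INR p + q) * s)) (a p))).
 apply csum_ext. intros j _.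
 rewrite (DerC_mult (fun s => eiC ((INR j + q) * s)) (fun _ => a j)).
 rewrite DerC_eiC, DerC_const. cring. apply ex_derC_eiC. apply ex_derC_const.
 intros j _. apply (ex_derC_mult (fun s => eiC ((INR j + q) * s)) (fun _ => a j)).
 apply ex_derC_eiC. apply ex_derC_const. Qed.

Section Gen.
Variable (U : R -> R -> Prop) (b : R -> R -> R -> M2) (N : nat) (c : Z -> R -> R -> M2).
Variable (pr : M2 -> C).
Hypothesis Hpr : forall u w t, pr (fourier_sum N c u w t) =
  csum (fun p => Cmult (eiC ((INR p + - INR N) * t)) (pr (c (Z.of_nat p - Z.of_nat N)%Z u w))) (2*N+1).
Hypothesis Hbc : forall x y t, U x y -> b x y t = fourier_sum N c x y t.

Lemma GA u w d s : U u w -> (d <= 2)%nat -> s = INR d + INR N ->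
  Dft (2*N+3) s (fun t => pr (b u w t)) = if Nat.eqb d 0 then pr (c (- Z.of_nat N)%Z u w) else RtoC 0.
Proof. intros Hu Hd Hs.
 apply (Dft_trig (2*N+3) (- INR N) (fun p => pr (c (Z.of_nat p - Z.of_nat N)%Z u w)) (2*N+1)).
 lia. lia. rewrite Hs; ring. intros t. rewrite Hbc by auto. apply Hpr. Qed.

Lemma GC x y d s : U x y -> (d <= 2)%nat -> s = INR d + INR N ->
  Dft (2*N+3) s (fun t => DerC (fun s => pr (b x y s)) t) =
  if Nat.eqb d 0 then Cmult (0, - INR N) (pr (c (- Z.of_nat N)%Z x y)) else RtoC 0.
Proof. intros Hu Hd Hs.
 assert (E : (fun s => pr (b x y s)) = (fun s => csum (fun p => Cmult (eiC ((INR p + - INR N) * s)) (pr (c (Z.of_nat p - Z.of_nat N)%Z x y))) (2*N+1))).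
 { apply functional_extensionality; intros s'. rewrite Hbc by auto. apply Hpr. }
 rewrite E.
 rewrite (Dft_trig (2*N+3) (- INR N) (fun p => Cmult (0, INR p + - INR N) (pr (c (Z.of_nat p - Z.of_nat N)%Z x y))) (2*N+1) d).
 destruct d; simpl; auto. f_equal. f_equal. ring.
 lia. lia. rewrite Hs; ring. intros t. apply DerC_trig. Qed.
End Gen.

Lemma NF (E co si lx ly : R) (DX DY DT A1 A2 B : M2) :
  M2add (M2scal (RtoC E) (M2add (M2add (M2scal (RtoC co) DX) (M2scal (RtoC si) DY))
           (M2scal (RtoC (- lx * si + ly * co)) DT)))
        (M2mul (M2scal (RtoC E) (M2add (M2scal (RtoC co) A1) (M2scal (RtoC si) A2))) B) =
  M2scal (RtoC E) (M2add (M2add (M2scal (RtoC co) DX) (M2scal (RtoC si) DY))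
    (M2add (M2add (M2scal (RtoC si) (M2scal (RtoC (- lx)) DT)) (M2scal (RtoC co) (M2scal (RtoC ly) DT)))
      (M2add (M2scal (RtoC co) (M2mul A1 B)) (M2scal (RtoC si) (M2mul A2 B))))).
Proof.
 destruct DX as [[] [] [] []], DY as [[] [] [] []], DT as [[] [] [] []], A1 as [[] [] [] []],
   A2 as [[] [] [] []], B as [[] [] [] []].
 cbv [M2add M2scal M2mul m11 m12 m21 m22]. f_equal; cring2. Qed.

Lemma scal_cancel (E : R) (K : M2) : E <> 0 -> M2scal (RtoC E) K = M2zero -> K = M2zero.
Proof. intros HE H. destruct K as [[] [] [] []]. cbv [M2scal M2zero m11 m12 m21 m22] in *.
 injection H; intros.
 repeat match goal with Hh : Cmult _ _ = _ |- _ => unfold Cmult in Hh; simpl in Hh; injection Hh; clear Hh; intros end.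
 f_equal; apply injective_projections; simpl; nra. Qed.

Lemma smooth_exd U f u w t : smooth3_on U f -> U u w ->
  ex_derive (fun s => f s w t) u /\ ex_derive (fun s => f u s t) w.
Proof. intros H Hu. destruct (H nil u w t Hu) as (_&H1&H2&_). split; assumption. Qed.

Lemma smoothM_exd U f u w t : smoothM3_on U f -> U u w ->
  ex_derM (fun s => f s w t) u /\ ex_derM (fun s => f u s t) w.
Proof. intros ([H1 H2]&[H3 H4]&[H5 H6]&[H7 H8]) Hu.
 destruct (smooth_exd _ _ u w t H1 Hu), (smooth_exd _ _ u w t H2 Hu),
   (smooth_exd _ _ u w t H3 Hu), (smooth_exd _ _ u w t H4 Hu),
   (smooth_exd _ _ u w t H5 Hu), (smooth_exd _ _ u w t H6 Hu),
   (smooth_exd _ _ u w t H7 Hu), (smooth_exd _ _ u w t H8 Hu).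
 split; repeat split; assumption. Qed.

Section Main.
Variable (U : R -> R -> Prop) (b : R -> R -> R -> M2) (N : nat) (c : Z -> R -> R -> M2).
Hypothesis Hbc : forall x y t, U x y -> b x y t = fourier_sum N c x y t.
Let h := c (- Z.of_nat N)%Z.

Lemma VA u w : U u w -> DftM (2*N+3) (INR N) (fun t => b u w t) = h u w.
Proof. intros Hu. unfold DftM, h.
 rewrite (GA U b N c m11 (fs_m11 N c) Hbc u w 0), (GA U b N c m12 (fs_m12 N c) Hbc u w 0),
   (GA U b N c m21 (fs_m21 N c) Hbc u w 0), (GA U b N c m22 (fs_m22 N c) Hbc u w 0); try (simpl; ring); auto.
 simpl. destruct (c _ u w); reflexivity. Qed.

Lemma VB u w : U u w -> DftM (2*N+3) (INR N + 2) (fun t => b u w t) = M2zero.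
Proof. intros Hu. unfold DftM.
 rewrite (GA U b N c m11 (fs_m11 N c) Hbc u w 2), (GA U b N c m12 (fs_m12 N c) Hbc u w 2),
   (GA U b N c m21 (fs_m21 N c) Hbc u w 2), (GA U b N c m22 (fs_m22 N c) Hbc u w 2); try (simpl; ring); auto. Qed.

Lemma VC x y : U x y -> DftM (2*N+3) (INR N) (fun t => DerM (fun s => b x y s) t) = M2scal (0, - INR N) (h x y).
Proof. intros Hu. unfold DftM, DerM, h; cbn [m11 m12 m21 m22].
 rewrite (GC U b N c m11 (fs_m11 N c) Hbc x y 0), (GC U b N c m12 (fs_m12 N c) Hbc x y 0),
   (GC U b N c m21 (fs_m21 N c) Hbc x y 0), (GC U b N c m22 (fs_m22 N c) Hbc x y 0); try (simpl; ring); auto. Qed.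

Lemma VD x y : U x y -> DftM (2*N+3) (INR N + 2) (fun t => DerM (fun s => b x y s) t) = M2zero.
Proof. intros Hu. unfold DftM, DerM; cbn [m11 m12 m21 m22].
 rewrite (GC U b N c m11 (fs_m11 N c) Hbc x y 2), (GC U b N c m12 (fs_m12 N c) Hbc x y 2),
   (GC U b N c m21 (fs_m21 N c) Hbc x y 2), (GC U b N c m22 (fs_m22 N c) Hbc x y 2); try (simpl; ring); auto. Qed.

Hypothesis HU : open2 U.
Hypothesis Hb : smoothM3_on U b.

Lemma loc_x x y : U x y -> locally x (fun u => U u y).
Proof. intros Hu. destruct (HU x y Hu) as (r&Hr&H). apply (locally_of x r); auto.
 intros u Hu'. apply H; auto. rewrite Rminus_eq_0, Rabs_R0; auto. Qed.
Lemma loc_y x y : U x y -> locally y (fun w => U x w).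
Proof. intros Hu. destruct (HU x y Hu) as (r&Hr&H). apply (locally_of y r); auto.
 intros w Hw. apply H; auto. rewrite Rminus_eq_0, Rabs_R0; auto. Qed.

Lemma VX0 x y : U x y -> DftM (2*N+3) (INR N) (fun t => DerM (fun u => b u y t) x) = DerM (fun u => h u y) x.
Proof. intros Hu. rewrite (DftM_DerM (2*N+3) (INR N) (fun u t => b u y t) x).
 apply DerM_ext_loc. apply (filter_imp (fun u => U u y)); [|apply loc_x; auto]. intros u Hu'. apply VA; auto.
 intros t. apply (smoothM_exd U b x y t Hb Hu). Qed.
Lemma VX2 x y : U x y -> DftM (2*N+3) (INR N + 2) (fun t => DerM (fun u => b u y t) x) = M2zero.
Proof. intros Hu. rewrite (DftM_DerM (2*N+3) (INR N + 2) (fun u t => b u y t) x).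
 rewrite <- (DerM_zero x). apply DerM_ext_loc. apply (filter_imp (fun u => U u y)); [|apply loc_x; auto]. intros u Hu'. apply VB; auto.
 intros t. apply (smoothM_exd U b x y t Hb Hu). Qed.
Lemma VY0 x y : U x y -> DftM (2*N+3) (INR N) (fun t => DerM (fun w => b x w t) y) = DerM (fun w => h x w) y.
Proof. intros Hu. rewrite (DftM_DerM (2*N+3) (INR N) (fun w t => b x w t) y).
 apply DerM_ext_loc. apply (filter_imp (fun w => U x w)); [|apply loc_y; auto]. intros u Hu'. apply VA; auto.
 intros t. apply (smoothM_exd U b x y t Hb Hu). Qed.
Lemma VY2 x y : U x y -> DftM (2*N+3) (INR N + 2) (fun t => DerM (fun w => b x w t) y) = M2zero.
Proof. intros Hu. rewrite (DftM_DerM (2*N+3) (INR N + 2) (fun w t => b x w t) y).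
 rewrite <- (DerM_zero y). apply DerM_ext_loc. apply (filter_imp (fun w => U x w)); [|apply loc_y; auto]. intros u Hu'. apply VB; auto.
 intros t. apply (smoothM_exd U b x y t Hb Hu). Qed.

Lemma exh_x x y : U x y -> ex_derM (fun u => h u y) x.
Proof. intros Hu. apply (ex_derM_ext_loc (fun u => DftM (2*N+3) (INR N) (fun t => b u y t))).
 apply (filter_imp (fun u => U u y)); [|apply loc_x; auto]. intros u Hu'. apply VA; auto.
 apply (ex_derM_DftM _ _ (fun u t => b u y t)). intros t. apply (smoothM_exd U b x y t Hb Hu). Qed.
Lemma exh_y x y : U x y -> ex_derM (fun w => h x w) y.
Proof. intros Hu. apply (ex_derM_ext_loc (fun w => DftM (2*N+3) (INR N) (fun t => b x w t))).
 apply (filter_imp (fun w => U x w)); [|apply loc_y; auto]. intros u Hu'. apply VA; auto.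
 apply (ex_derM_DftM _ _ (fun w t => b x w t)). intros t. apply (smoothM_exd U b x y t Hb Hu). Qed.
End Main.

Lemma Clem (e : R -> R) (h1 h2 : R -> C) (a1 a2 : C) s :
  ex_derive e s -> ex_derC h1 s -> ex_derC h2 s ->
  ex_derC (fun u => Cmult (RtoC (e u)) (Cplus (Cmult (h1 u) a1) (Cmult (h2 u) a2))) s /\
  DerC (fun u => Cmult (RtoC (e u)) (Cplus (Cmult (h1 u) a1) (Cmult (h2 u) a2))) s =
  Cplus (Cmult (RtoC (Derive e s)) (Cplus (Cmult (h1 s) a1) (Cmult (h2 s) a2)))
        (Cmult (RtoC (e s)) (Cplus (Cmult (DerC h1 s) a1) (Cmult (DerC h2 s) a2))).
Proof. intros He H1 H2.
 assert (E1 : ex_derC (fun u => Cmult (h1 u) a1) s) by (apply (ex_derC_mult h1 (fun _ => a1)); auto; apply ex_derC_const).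
 assert (E2 : ex_derC (fun u => Cmult (h2 u) a2) s) by (apply (ex_derC_mult h2 (fun _ => a2)); auto; apply ex_derC_const).
 assert (E3 : ex_derC (fun u => Cplus (Cmult (h1 u) a1) (Cmult (h2 u) a2)) s) by (apply (ex_derC_plus (fun u => Cmult (h1 u) a1) (fun u => Cmult (h2 u) a2)); auto).
 assert (E0 : ex_derC (fun u => RtoC (e u)) s) by (apply ex_derC_RtoC; auto).
 split. apply (ex_derC_mult (fun u => RtoC (e u)) (fun u => Cplus (Cmult (h1 u) a1) (Cmult (h2 u) a2))); auto.
 rewrite (DerC_mult (fun u => RtoC (e u)) (fun u => Cplus (Cmult (h1 u) a1) (Cmult (h2 u) a2))); auto.
 rewrite (DerC_plus (fun u => Cmult (h1 u) a1) (fun u => Cmult (h2 u) a2)); auto.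
 rewrite (DerC_mult h1 (fun _ => a1)), (DerC_mult h2 (fun _ => a2)); auto; try apply ex_derC_const.
 rewrite !DerC_const, DerC_RtoC. cring2. Qed.

Theorem lemma5p1
  (U : R -> R -> Prop) (lam : R -> R -> R) (Ax Ay : R -> R -> M2)
  (b : R -> R -> R -> M2) (N : nat) (c : Z -> R -> R -> M2) (xi : C2) :
  open2 U ->
  smooth2_on U lam ->
  smoothM2_on U Ax -> smoothM2_on U Ay ->
  (forall x y, U x y -> in_su2 (Ax x y) /\ in_su2 (Ay x y)) ->
  smoothM3_on U b ->
  (forall x y t, U x y -> in_SU2 (b x y t)) ->
  (forall x y t, U x y ->
     M2add (Xgeod lam b x y t) (M2mul (A_SM lam Ax Ay x y t) (b x y t)) = M2zero) ->
  (1 <= N)%nat ->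
  (forall x y t, U x y -> b x y t = fourier_sum N c x y t) ->
  (exists x y, U x y /\ c (- Z.of_nat N)%Z x y <> M2zero) ->
  let v := fun x y =>
    C2scal (RtoC (exp (- INR N * lam x y))) (M2app (c (- Z.of_nat N)%Z x y) xi) in
  forall x y, U x y ->
    ex_derC2 (fun s => v s y) x /\ ex_derC2 (fun s => v x s) y /\
    C2add (dbar v x y) (M2app (Azbar Ax Ay x y) (v x y)) = C2zero.
Proof.
intros HU Hlam HAx HAy Hsu2 Hb HSU Heq HN Hbc Hex v x y Hxy.
set (M := (2*N+3)%nat).
set (lx := Derive (fun s => lam s y) x). set (ly := Derive (fun s => lam x s) y).
set (h := c (- Z.of_nat N)%Z).
assert (Heq' : forall t, M2scal (RtoC (exp (- lam x y)))
   (M2add (M2add (M2scal (RtoC (cos t)) (DerM (fun u => b u y t) x)) (M2scal (RtoC (sin t)) (DerM (fun w => b x w t) y)))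
    (M2add (M2add (M2scal (RtoC (sin t)) (M2scal (RtoC (- lx)) (DerM (fun s => b x y s) t)))
                  (M2scal (RtoC (cos t)) (M2scal (RtoC ly) (DerM (fun s => b x y s) t))))
      (M2add (M2scal (RtoC (cos t)) (M2mul (Ax x y) (b x y t))) (M2scal (RtoC (sin t)) (M2mul (Ay x y) (b x y t)))))) = M2zero).
{ intros t. rewrite <- NF. apply (Heq x y t Hxy). }
apply functional_extensionality in Heq'.
apply (f_equal (DftM M (INR N + 1))) in Heq'.
rewrite DftM_zero in Heq'.
repeat (rewrite ?DftM_add, ?DftM_cos, ?DftM_sin, ?DftM_mul in Heq'; rewrite ?DftM_scal in Heq').
replace (INR N + 1 + 1) with (INR N + 2) in Heq' by ring.
replace (INR N + 1 - 1) with (INR N) in Heq' by ring. unfold M in Heq'.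
assert (VC' : DftM (2*N+3) (INR N) (DerM (fun s => b x y s)) = M2scal (0, - INR N) (h x y)) by exact (VC U b N c Hbc x y Hxy).
assert (VD' : DftM (2*N+3) (INR N + 2) (DerM (fun s => b x y s)) = M2zero) by exact (VD U b N c Hbc x y Hxy).
assert (VA' : DftM (2*N+3) (INR N) (b x y) = h x y) by exact (VA U b N c Hbc x y Hxy).
assert (VB' : DftM (2*N+3) (INR N + 2) (b x y) = M2zero) by exact (VB U b N c Hbc x y Hxy).
rewrite VC', VD', VA', VB' in Heq'.
rewrite (VX0 U b N c Hbc HU Hb x y Hxy), (VX2 U b N c Hbc HU Hb x y Hxy),
  (VY0 U b N c Hbc HU Hb x y Hxy), (VY2 U b N c Hbc HU Hb x y Hxy) in Heq'.
match type of Heq' with M2scal _ ?K0 = _ => set (K := K0) in Heq' end.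
apply scal_cancel in Heq'; [|apply Rgt_not_eq, exp_pos].
assert (HeN : forall (w : R -> R) s, ex_derive w s ->
   Derive (fun u => exp (- INR N * w u)) s = exp (- INR N * w s) * (- INR N * Derive w s)).
{ intros w s Hw. apply is_derive_unique. auto_derive; auto. change (Derive (fun x0 => w x0) s) with (Derive w s). ring. }
assert (Hlx : ex_derive (fun s => lam s y) x) by exact (proj1 (smooth_exd U _ x y 0 Hlam Hxy)).
assert (Hly : ex_derive (fun s => lam x s) y) by exact (proj2 (smooth_exd U _ x y 0 Hlam Hxy)).
destruct (exh_x U b N c Hbc HU Hb x y Hxy) as (Hx11&Hx12&Hx21&Hx22).
destruct (exh_y U b N c Hbc HU Hb x y Hxy) as (Hy11&Hy12&Hy21&Hy22).
fold h in Hx11, Hx12, Hx21, Hx22, Hy11, Hy12, Hy21, Hy22.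
destruct xi as [xi1 xi2].
assert (Ex : ex_derive (fun s => exp (- INR N * lam s y)) x).
 { apply (ex_derive_comp (fun z => exp (- INR N * z)) (fun s => lam s y)). auto_derive; auto. auto. }
assert (Ey : ex_derive (fun s => exp (- INR N * lam x s)) y).
 { apply (ex_derive_comp (fun z => exp (- INR N * z)) (fun s => lam x s)). auto_derive; auto. auto. }
assert (HeNx : Derive (fun s => exp (- INR N * lam s y)) x = exp (- INR N * lam x y) * (- INR N * lx)) by exact (HeN _ _ Hlx).
assert (HeNy : Derive (fun s => exp (- INR N * lam x s)) y = exp (- INR N * lam x y) * (- INR N * ly)) by exact (HeN _ _ Hly).
destruct (Clem (fun s => exp (- INR N * lam s y)) (fun s => m11 (h s y)) (fun s => m12 (h s y)) xi1 xi2 x Ex Hx11 Hx12) as [A1 B1].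
destruct (Clem (fun s => exp (- INR N * lam s y)) (fun s => m21 (h s y)) (fun s => m22 (h s y)) xi1 xi2 x Ex Hx21 Hx22) as [A2 B2].
destruct (Clem (fun s => exp (- INR N * lam x s)) (fun s => m11 (h x s)) (fun s => m12 (h x s)) xi1 xi2 y Ey Hy11 Hy12) as [A3 B3].
destruct (Clem (fun s => exp (- INR N * lam x s)) (fun s => m21 (h x s)) (fun s => m22 (h x s)) xi1 xi2 y Ey Hy21 Hy22) as [A4 B4].
split; [split; assumption|split; [split; assumption|]].
unfold dbar, DerC2, v. fold h. cbn [fst snd C2scal M2app]. rewrite B1, B2, B3, B4, HeNx, HeNy.
transitivity (C2scal (RtoC (exp (- INR N * lam x y))) (M2app K (xi1, xi2))).
2:{ rewrite Heq'. apply injective_projections; cbn [fst snd C2scal M2app M2zero C2zero m11 m12 m21 m22]; cring2. }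
unfold K, h.
apply injective_projections; cbn [fst snd C2add C2scal M2app M2add M2scal M2mul M2zero m11 m12 m21 m22 DerM Azbar];
 apply injective_projections; cbn [fst snd Cplus Cmult RtoC Ci Copp Cminus]; ring.
Qed.
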